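(* Every graph of pathwidth at most $p$ is $p^2$-almost equitably $(p+1)$-colorable.
   Context: A $k$-coloring is equitable if its $k$ color classes (stable sets) have sizes pairwise differing by at most one. A graph $G$ is $q$-almost equitably $k$-colorable if there is a set $X$ of at most $q$ vertices such that $G\setminus X$ has an equitable $k$-coloring. *)

(* Defs.v *)
From mathcomp Require Import all_boot.
Set Implicit Arguments. Unset Strict Implicit. Unset Printing Implicit Defensive.

Definition simple_graph (T : finType) (e : rel T) : Prop :=
  symmetric e /\ irreflexive e.

Definition path_decomposition (T : finType) (e : rel T) (P : seq {set T}) : Prop :=
  [/\ forall v : T, exists2 B, B \in P & v \in B,
      forall u v : T, e u v -> exists2 B, B \in P & (u \in B) && (v \in B)
    & forall (v : T) (i j l : nat), i <= l -> l <= j -> j < size P ->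
        v \in nth set0 P i -> v \in nth set0 P j -> v \in nth set0 P l].

(* Width of a decomposition = max bag size - 1; so width <= p iff all bags
   have at most p+1 vertices. *)
Definition pathwidth_at_most (T : finType) (e : rel T) (p : nat) : Prop :=
  exists P : seq {set T}, path_decomposition e P /\ forall B, B \in P -> #|B| <= p.+1.

(* c is a proper k-coloring of G \ X (the subgraph induced on V \ X). *)
Definition proper_coloring_minus (T : finType) (e : rel T) (X : {set T}) (k : nat)
  (c : T -> 'I_k) : Prop :=
  forall u v : T, u \notin X -> v \notin X -> e u v -> c u != c v.

Definition color_class (T : finType) (X : {set T}) (k : nat) (c : T -> 'I_k) (i : 'I_k)
  : {set T} := [set x | (x \notin X) && (c x == i)].

Definition equitably_colorable_minus (T : finType) (e : rel T) (X : {set T}) (k : nat)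
  : Prop :=
  exists c : T -> 'I_k, proper_coloring_minus e X c /\
    forall i j : 'I_k, #|color_class X c i| <= #|color_class X c j| + 1.

Definition almost_equitably_colorable (T : finType) (e : rel T) (q k : nat) : Prop :=
  exists X : {set T}, #|X| <= q /\ equitably_colorable_minus e X k.

(* Main.v *)
Require Import Defs.
From mathcomp Require Import all_boot zify.
Set Implicit Arguments. Unset Strict Implicit. Unset Printing Implicit Defensive.

Lemma ivt (f : nat -> nat) K t :
  (forall y, y < K -> f y.+1 <= f y + 1 /\ f y <= f y.+1 + 1) ->
  f 0 <= t -> t <= f K -> exists y, f y = t.
Proof.
elim: K => [|K IH] Hs H0 HK; first by exists 0; apply/eqP; rewrite eqn_leq H0 HK.
case: (leqP t (f K)) => Ht.
  by apply: IH => // y Hy; apply: Hs; apply: ltnW.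
have [H1 _] := Hs K (ltnSn K).
by exists K.+1; lia.
Qed.

Section Main.
Variable T : finType.
Variable P : seq {set T}.
Variable p : nat.
Hypothesis cover : forall v : T, exists2 B, B \in P & v \in B.
Hypothesis consec : forall (v : T) (i j l : nat), i <= l -> l <= j -> j < size P ->
        v \in nth set0 P i -> v \in nth set0 P j -> v \in nth set0 P l.
Hypothesis bagsz : forall B, B \in P -> #|B| <= p.+1.

Definition bag j := nth set0 P j.

Lemma bag_card j : #|bag j| <= p.+1.
Proof.
rewrite /bag; case: (ltnP j (size P)) => Hj.
  by apply: bagsz; apply: mem_nth.
by rewrite nth_default // cards0.
Qed.

Lemma bag_lt v j : v \in bag j -> j < size P.
Proof.
rewrite /bag; case: (ltnP j (size P)) => // Hj.
by rewrite nth_default // inE.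
Qed.

Definition lf v := find (fun B : {set T} => v \in B) P.

Lemma lf_lt v : lf v < size P.
Proof.
rewrite /lf -has_find; case: (cover v) => B HB Hv.
by apply/hasP; exists B.
Qed.

Lemma lf_in v : v \in bag (lf v).
Proof.
rewrite /bag /lf.
have := @nth_find _ set0 (fun B : {set T} => v \in B) P.
apply; case: (cover v) => B HB Hv; by apply/hasP; exists B.
Qed.

Lemma lf_min v j : v \in bag j -> lf v <= j.
Proof.
move=> H; rewrite leqNgt; apply/negP => Hlt.
by have := @before_find _ set0 (fun B : {set T} => v \in B) P j Hlt; rewrite -/(bag j) H.
Qed.

Lemma in_bag_mid v i j : lf v <= i -> i <= j -> v \in bag j -> v \in bag i.
Proof.
move=> H1 H2 H3; apply: (@consec v (lf v) j i) => //.
  exact: bag_lt H3.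
exact: lf_in.
Qed.

Lemma arith_key a b c d n : c < n -> a < b -> a * n + c < b * n + d.
Proof. move=> H1 H2; have : a.+1 * n <= b * n by rewrite leq_mul2r H2 orbT.
rewrite mulSn; lia. Qed.

Definition key v := lf v * #|T| + enum_rank v.

Lemma key_lf u w : key u <= key w -> lf u <= lf w.
Proof.
rewrite /key => H; rewrite leqNgt; apply/negP => Hlt.
by have := arith_key (enum_rank u) (ltn_ord (enum_rank w)) Hlt; rewrite ltnNge H.
Qed.

Lemma key_inj : injective key.
Proof.
move=> u w H.
have E : lf u = lf w by apply/eqP; rewrite eqn_leq !key_lf // H.
move: H; rewrite /key E => /addnI /val_inj H.
by apply: enum_rank_inj.
Qed.

Lemma key_lt v : key v < size P * #|T|.
Proof.
rewrite /key; have := arith_key 0 (ltn_ord (enum_rank v)) (lf_lt v).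
by rewrite addn0.
Qed.


Definition share u w := [exists j : 'I_(size P), (u \in bag j) && (w \in bag j)].

Lemma share_sym u w : share u w = share w u.
Proof. by apply/existsP/existsP => [] [j /andP [H1 H2]]; exists j; rewrite H1 H2. Qed.
Definition adj u w := (u != w) && share u w.
Definition proper (S : {set T}) (c : T -> 'I_p.+1) :=
  forall u w, u \in S -> w \in S -> adj u w -> c u != c w.

Lemma shareP u w j : u \in bag j -> w \in bag j -> share u w.
Proof.
move=> Hu Hw; apply/existsP; exists (Ordinal (bag_lt Hu)); by rewrite Hu Hw.
Qed.

Lemma share_bag u w : share u w -> exists j, u \in bag j /\ w \in bag j.
Proof. by case/existsP => j /andP [H1 H2]; exists j. Qed.

Lemma earlier_in_bag u v : key u <= key v -> share u v -> u \in bag (lf v).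
Proof.
move=> Hk /share_bag [j [Hu Hv]].
apply: (in_bag_mid (j := j)) => //; first exact: key_lf.
exact: lf_min.
Qed.

Lemma same_bag S c u w j : proper S c -> u \in S -> w \in S ->
  u \in bag j -> w \in bag j -> c u = c w -> u = w.
Proof.
move=> Hp Hu Hw Hbu Hbw Hc; case: (eqVneq u w) => // Huw.
have : adj u w by rewrite /adj Huw (shareP Hbu Hbw).
by move/(Hp _ _ Hu Hw); rewrite Hc eqxx.
Qed.

Lemma proper_sub (S S' : {set T}) c : S' \subset S -> proper S c -> proper S' c.
Proof. by move=> /subsetP Hs Hp u w Hu Hw; apply: Hp; apply: Hs. Qed.

Lemma greedy : exists c : T -> 'I_p.+1, proper setT c.
Proof.
suff: forall n, exists c : T -> 'I_p.+1, proper [set v | key v < n] c.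
  move=> /(_ (size P * #|T|)) [c Hc]; exists c => u w _ _; apply: Hc;
  by rewrite inE key_lt.
elim=> [|n [c Hc]].
  by exists (fun _ => ord0) => u w; rewrite inE.
case: (pickP [pred v | key v == n]) => [v /eqP Hv | Hno]; last first.
  exists c => u w; rewrite !inE => Hu Hw; apply: Hc; rewrite inE.
    by rewrite ltn_neqAle -ltnS Hu andbT; have := Hno u; move=> /= ->.
  by rewrite ltn_neqAle -ltnS Hw andbT; have := Hno w; move=> /= ->.
set X := bag (lf v) :\ v.
have [col Hcol] : exists col, col \notin [set c x | x in X].
  case: (pickP [pred col | col \notin [set c x | x in X]]) => [col Hcol|Hnone].
    by exists col.
  exfalso.
  have Hsub : [set: 'I_p.+1] \subset [set c x | x in X].
    by apply/subsetP => x _; have := Hnone x; move=> /= /negbFE.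
  have := subset_leq_card Hsub; rewrite cardsT card_ord => H1.
  have H2 := leq_imset_card c X.
  have := bag_card (lf v); rewrite (cardsD1 v) lf_in -/X => H3.
  have H4 : #|X| <= p by move: H3; rewrite add1n ltnS.
  by move: (leq_trans H1 H2); rewrite ltnNge H4.
have Hnb : forall w, key w < n -> share w v -> c w != col.
  move=> w Hw Hs; apply/eqP => Hcw; move: Hcol; rewrite -Hcw; move/negP; apply.
  apply: imset_f.
  rewrite /X !inE earlier_in_bag ?Hv ?(ltnW Hw) // andbT.
  by apply/eqP => E; move: Hw; rewrite E Hv ltnn.
exists (fun x => if x == v then col else c x).
have Hlt : forall u, u \in [set v0 | key v0 < n.+1] -> u != v -> key u < n.
  move=> u; rewrite inE ltnS leq_eqVlt => /orP [/eqP E|] //.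
  by rewrite -Hv in E; rewrite (key_inj E) eqxx.
move=> u w Hu Hw /andP [Huw Hs].
case: (eqVneq u v) => [Euv|Huv]; case: (eqVneq w v) => [Ewv|Hwv].
- by move: Huw; rewrite Euv Ewv eqxx.
- subst u; rewrite eq_sym; apply: Hnb; first exact: Hlt.
  by rewrite /share; apply/existsP; case/existsP: Hs => j /andP [H1 H2];
     exists j; rewrite H1 H2.
- subst w; apply: Hnb; first exact: Hlt. exact: Hs.
- apply: Hc; rewrite ?inE ?Hlt //; by rewrite /adj Huw Hs.
Qed.


Implicit Types (S D : {set T}) (c : T -> 'I_p.+1) (U Y : {set 'I_p.+1}).

Definition cls (S : {set T}) (c : T -> 'I_p.+1) j := [set v in S | c v == j].
Definition cU (S : {set T}) (c : T -> 'I_p.+1) (U : {set 'I_p.+1}) := [set v in S | c v \in U].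

Definition step (U : {set 'I_p.+1}) (S : {set T}) (c : T -> 'I_p.+1) (S' : {set T}) (c' : T -> 'I_p.+1) :=
  [/\ S' \subset S, (forall v, v \in S :\: S' -> c v \in U) &
      (forall v, v \in S' -> (c' v \in U) = (c v \in U) /\ (c v \notin U -> c' v = c v))].

Lemma step_refl U S c : step U S c S c.
Proof. by split => // v; rewrite setDv inE. Qed.

Lemma step_trans U S1 c1 S2 c2 S3 (c3 : T -> 'I_p.+1) :
  step U S1 c1 S2 c2 -> step U S2 c2 S3 c3 -> step U S1 c1 S3 c3.
Proof.
case=> [/subsetP H1 H2 H3] [/subsetP H4 H5 H6]; split.
- by apply/subsetP => v Hv; apply: H1; apply: H4.
- move=> v; rewrite inE => /andP [Hv3 Hv1].
  case: (boolP (v \in S2)) => Hv2.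
    have [E _] := H3 v Hv2; rewrite -E; apply: H5; by rewrite inE Hv3.
  by apply: H2; rewrite inE Hv2.
- move=> v Hv3; have Hv2 := H4 v Hv3.
  have [E1 F1] := H3 v Hv2; have [E2 F2] := H6 v Hv3.
  split; first by rewrite E2 E1.
  by move=> Hn; rewrite F2 ?F1 // E1.
Qed.

Lemma step_mono U U' S c S' c' : U \subset U' -> step U S c S' c' -> step U' S c S' c'.
Proof.
move=> /subsetP HU [H1 H2 H3]; split => //.
  by move=> v Hv; apply: HU; apply: H2.
move=> v Hv; have [E F] := H3 v Hv.
case: (boolP (c v \in U)) => Hc.
  have Hc' : c' v \in U by rewrite E.
  by rewrite (HU _ Hc) (HU _ Hc').
by rewrite F.
Qed.

Lemma step_cls U S c S' c' j : step U S c S' c' -> j \notin U -> cls S' c' j = cls S c j.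
Proof.
case=> [/subsetP H1 H2 H3] Hj; apply/setP => v; rewrite !inE.
case: (boolP (v \in S')) => Hv /=.
  have [E F] := H3 v Hv; rewrite (H1 _ Hv).
  case: (boolP (c v \in U)) => Hc; last by rewrite F.
  have Hc' : c' v \in U by rewrite E.
  have N1 : c' v != j by apply: contraNneq Hj => <-.
  have N2 : c v != j by apply: contraNneq Hj => <-.
  by rewrite (negbTE N1) (negbTE N2).
case: (boolP (v \in S)) => Hs //=; case: eqP => // E.
by have := H2 v; rewrite inE Hv Hs /= E (negbTE Hj) => /(_ isT).
Qed.

Lemma step_cU U S c S' c' : step U S c S' c' -> #|cU S' c' U| + #|S :\: S'| = #|cU S c U|.
Proof.
case=> [/subsetP H1 H2 H3]; rewrite -(cardsID S' (cU S c U)).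
have -> : cU S c U :&: S' = cU S' c' U.
  apply/setP => v; rewrite !inE; case: (boolP (v \in S')) => Hv; last by rewrite andbF.
  by have [E _] := H3 v Hv; rewrite E (H1 _ Hv) /= ?andbT.
congr (_ + _); apply: eq_card => v; rewrite !inE; case: (boolP (v \in S')) => //= Hv.
case: (boolP (v \in S)) => //= Hs; by rewrite H2 // inE Hv Hs.
Qed.

Lemma diff_add (S1 S2 S3 : {set T}) : S3 \subset S2 -> S2 \subset S1 ->
  #|S1 :\: S3| = #|S1 :\: S2| + #|S2 :\: S3|.
Proof.
move=> H32 H21; have H31 := subset_trans H32 H21.
rewrite !cardsD (setIidPr H32) (setIidPr H21) (setIidPr H31).
have := subset_leq_card H32; have := subset_leq_card H21; lia.
Qed.

Lemma diff_sub (S1 D : {set T}) : D \subset S1 -> S1 :\: (S1 :\: D) = D.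
Proof. by move=> H; rewrite setDDr setDv set0U (setIidPr H). Qed.

Lemma sum_cls S c U : \sum_(j in U) #|cls S c j| = #|cU S c U|.
Proof.
rewrite -sum1_card (partition_big c (mem U)) /=; last by move=> v; rewrite inE => /andP [].
apply: eq_bigr => j Hj; rewrite -sum1_card; apply: eq_bigl => v.
rewrite !inE; case: eqP => [->|]; by rewrite ?Hj ?andbT ?andbF.
Qed.

Lemma cU_split S c U x : x \in U -> #|cU S c U| = #|cU S c (U :\ x)| + #|cls S c x|.
Proof.
move=> Hx; rewrite -(cardsID (cls S c x) (cU S c U)) addnC.
have -> : cU S c U :&: cls S c x = cls S c x.
  apply/setP => v; rewrite !inE; case: (v \in S) => //=; case: eqP => [->|]; by rewrite ?Hx ?andbT ?andbF.
congr (_ + _); apply: eq_card => v; rewrite !inE; case: (v \in S); rewrite ?andbF //=.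
Qed.

Lemma pad n : forall S c Y, n <= #|cU S c Y| ->
  exists S', step Y S c S' c /\ #|S :\: S'| = n.
Proof.
elim: n => [|n IH] S c Y Hn.
  by exists S; split; [apply: step_refl | rewrite setDv cards0].
have : 0 < #|cU S c Y| by apply: leq_trans Hn.
case/card_gt0P => v Hv; move: (Hv); rewrite inE => /andP [HvS HvY].
have Hc : #|cU (S :\ v) c Y| = #|cU S c Y| - 1.
  have -> : cU (S :\ v) c Y = cU S c Y :\ v.
    by apply/setP => x; rewrite !inE; case: (x == v).
  by rewrite (cardsD1 v (cU S c Y)) Hv add1n subn1.
have [S' [[/subsetP H1 H2 H3] Hc']] : exists S', step Y (S :\ v) c S' c /\ #|(S :\ v) :\: S'| = n.
  by apply: IH; rewrite Hc; lia.
exists S'; split.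
  split.
  - by apply/subsetP => x Hx; have := H1 x Hx; rewrite inE => /andP [].
  - move=> x; rewrite inE => /andP [HxS' HxS]; case: (eqVneq x v) => [->//|Hxv].
    by apply: H2; rewrite !inE HxS' Hxv.
  - by move=> x _.
rewrite (diff_add (S2 := S :\ v)); last by apply: subsetDl.
  by rewrite Hc' diff_sub ?sub1set // cards1 add1n.
by apply/subsetP.
Qed.


Lemma exists_min S y : (exists w, (w \in S) && (y <= key w)) ->
  exists w0, [/\ w0 \in S, y <= key w0 &
     forall w, w \in S -> y <= key w -> key w0 <= key w].
Proof.
case=> w1 Hw1.
case: (@arg_minnP T w1 (fun w => (w \in S) && (y <= key w)) key Hw1) => w0 /andP [H1 H2] H3.
exists w0; split => // w Hw Hy; apply: H3; by rewrite Hw Hy.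
Qed.

Section Swap.
Variable S : {set T}.
Variable c : T -> 'I_p.+1.
Variables a b : 'I_p.+1.
Hypothesis Hp : proper S c.

Definition cross y u := [exists w, (w \in S) && (y <= key w) && share u w].
Definition Aset y := [set u in S | (c u == a) && (key u < y) && ~~ cross y u].
Definition Bset y := [set w in S | (c w == b) && (y <= key w)].
Definition Dset y := [set u in S | ((c u == a) || (c u == b)) && (key u < y) && cross y u].
Definition sw x := if x == a then b else if x == b then a else x.
Definition swc y v := if y <= key v then sw (c v) else c v.

Lemma sw_inv x : sw (sw x) = x.
Proof.
rewrite /sw; case: (eqVneq x a) => [->|Hxa].
  by case: (eqVneq b a) => [->|Hba]; rewrite ?eqxx // (negbTE Hba) eqxx.
case: (eqVneq x b) => [->|Hxb]; first by rewrite eqxx.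
by rewrite (negbTE Hxa) (negbTE Hxb).
Qed.

Lemma sw_id x : x != a -> x != b -> sw x = x.
Proof. by move=> H1 H2; rewrite /sw (negbTE H1) (negbTE H2). Qed.

Lemma sw_ab x : (sw x \in [set a; b]) = (x \in [set a; b]).
Proof.
rewrite /sw !inE; case: (eqVneq x a) => [Exa|Hxa]; first by rewrite Exa eqxx orbT.
case: (eqVneq x b) => [Exb|Hxb] /=; first by rewrite ?eqxx ?orbT.
by rewrite (negbTE Hxa) (negbTE Hxb).
Qed.

Lemma cross_bag y u w0 : w0 \in S -> y <= key w0 ->
  (forall w, w \in S -> y <= key w -> key w0 <= key w) ->
  key u < y -> cross y u -> u \in bag (lf w0).
Proof.
move=> Hw0 Hy0 Hmin Hu /existsP [w /andP [/andP [Hw Hyw] Hsh]].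
case: (share_bag Hsh) => j [Huj Hwj].
apply: (in_bag_mid (j := j)) => //.
  apply: key_lf; apply: ltnW; exact: leq_trans Hu Hy0.
apply: leq_trans (lf_min Hwj); apply: key_lf; exact: Hmin.
Qed.

Lemma cross_S y u : cross y.+1 u -> cross y u.
Proof.
case/existsP => w /andP [/andP [H1 H2] H3]; apply/existsP; exists w.
by rewrite H1 H3 (ltnW H2).
Qed.

Lemma Aset_sub y : Aset y \subset Aset y.+1.
Proof.
apply/subsetP => u; rewrite !inE => /andP [-> /andP [/andP [-> Hk] Hc]] /=.
rewrite ltnS (ltnW Hk) /=.
by apply: contra Hc; apply: cross_S.
Qed.

Lemma card_diff_le1 (X Y : {set T}) : X \subset Y -> #|Y :\: X| <= 1 -> #|Y| <= #|X| + 1.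
Proof. move=> H; rewrite cardsD (setIidPr H); have := subset_leq_card H; lia. Qed.

Lemma Aset_step y : #|Aset y.+1| <= #|Aset y| + 1.
Proof.
apply: card_diff_le1; first exact: Aset_sub.
apply/card_le1_eqP => u1 u2.
have key_fact : forall u, u \in Aset y.+1 :\: Aset y ->
   [/\ u \in S, c u = a & (key u = y \/ (key u < y /\ cross y u))].
  move=> u; rewrite !inE => /andP [Hn /andP [HS /andP [/andP [/eqP Ha Hk] Hc]]].
  split => //; move: Hn; rewrite HS Ha eqxx /=.
  case: (ltnP (key u) y) => Hlt /=.
    by rewrite negbK => Hcr; right.
  by move=> _; left; apply/eqP; rewrite eqn_leq Hlt -ltnS Hk.
move=> H1 H2.
have [HS1 Ha1 Hk1] := key_fact u1 H1.
have [HS2 Ha2 Hk2] := key_fact u2 H2.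
have Hex : exists w, (w \in S) && (y <= key w).
  case: Hk1 => [E|[_ /existsP [w /andP [/andP [Hw Hy] _]]]].
    by exists u1; rewrite HS1 E leqnn.
  by exists w; rewrite Hw Hy.
have [w0 [Hw0 Hy0 Hmin]] := exists_min Hex.
have inb : forall u, u \in S -> (key u = y \/ (key u < y /\ cross y u)) -> u \in bag (lf w0).
  move=> u HS [E|[Hlt Hcr]]; last exact: cross_bag Hw0 Hy0 Hmin Hlt Hcr.
  have : key w0 = key u.
    apply/eqP; rewrite eqn_leq Hmin ?E ?leqnn //; by rewrite -E in Hy0.
  by move/key_inj => <-; apply: lf_in.
have E : u1 = u2.
  apply: (same_bag Hp HS1 HS2 (inb _ HS1 Hk1) (inb _ HS2 Hk2)).
  by rewrite Ha1 Ha2.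
by rewrite E.
Qed.

Lemma Bset_sub y : Bset y.+1 \subset Bset y.
Proof.
apply/subsetP => u; rewrite !inE => /andP [-> /andP [-> Hk]] /=; exact: ltnW.
Qed.

Lemma Bset_step y : #|Bset y| <= #|Bset y.+1| + 1.
Proof.
apply: card_diff_le1; first exact: Bset_sub.
apply/card_le1_eqP => u1 u2.
have kf : forall u, u \in Bset y :\: Bset y.+1 -> key u = y.
  move=> u; rewrite !inE => /andP [Hn /andP [HS /andP [Hb Hk]]].
  move: Hn; rewrite HS Hb /= -ltnNge ltnS => Hk2; apply/eqP; by rewrite eqn_leq Hk Hk2.
move=> H1 H2; have E : u1 = u2 by apply: key_inj; rewrite (kf _ H1) (kf _ H2).
by rewrite E.
Qed.

Lemma Dset_card y : #|Dset y| <= minn 2 p.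
Proof.
case: (set_0Vmem (Dset y)) => [->|[u0 Hu0]]; first by rewrite cards0.
have Hex : exists w, (w \in S) && (y <= key w).
  move: Hu0; rewrite inE => /andP [_ /andP [_ /existsP [w /andP [/andP [Hw Hy] _]]]].
  by exists w; rewrite Hw Hy.
have [w0 [Hw0 Hy0 Hmin]] := exists_min Hex.
have inb : forall u, u \in Dset y -> u \in bag (lf w0).
  move=> u; rewrite inE => /andP [HS /andP [/andP [_ Hlt] Hcr]].
  exact: cross_bag Hw0 Hy0 Hmin Hlt Hcr.
have DS : forall u, u \in Dset y -> u \in S by move=> u; rewrite inE => /andP [].
rewrite leq_min; apply/andP; split.
  rewrite -(cardsID [set u | c u == a] (Dset y)).
  have le1 : forall col, #|[set u in Dset y | c u == col]| <= 1.
    move=> col; apply/card_le1_eqP => u1 u2 /setIdP [H1 /eqP E1] /setIdP [H2 /eqP E2].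
    have E : u1 = u2 by apply: (same_bag Hp (DS _ H1) (DS _ H2) (inb _ H1) (inb _ H2)); rewrite E1 E2.
    by rewrite E.
  have E1 : Dset y :&: [set u | c u == a] = [set u in Dset y | c u == a].
    by apply/setP => u; rewrite !inE.
  have E2 : Dset y :\: [set u | c u == a] \subset [set u in Dset y | c u == b].
    apply/subsetP => u; rewrite !inE => /andP [Hna /andP [HS Hr]].
    rewrite HS Hr /=; move: Hr => /andP [/andP [Hab _] _].
    by move: Hab; rewrite (negbTE Hna).
  rewrite E1; have := le1 a; have := le1 b; have := subset_leq_card E2; lia.
have Hsub : Dset y \subset bag (lf w0) :\ w0.
  apply/subsetP => u Hu; rewrite !inE inb // andbT.
  apply/eqP => E; move: Hu; rewrite E inE => /andP [_ /andP [/andP [_ Hlt] _]].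
  by move: Hy0; rewrite leqNgt Hlt.
have := subset_leq_card Hsub; have := bag_card (lf w0).
rewrite (cardsD1 w0 (bag (lf w0))).
have -> : w0 \in bag (lf w0) by apply: lf_in.
rewrite add1n ltnS; move=> H1 H2; exact: leq_trans H2 H1.
Qed.


Lemma Dsub y : Dset y \subset S.
Proof. by apply/subsetP => u; rewrite inE => /andP []. Qed.

Lemma swap_step y : step [set a; b] S c (S :\: Dset y) (swc y).
Proof.
split; first exact: subsetDl.
  move=> v; rewrite diff_sub ?Dsub // inE => /andP [_ /andP [/andP [H _] _]].
  by rewrite !inE.
move=> v _; rewrite /swc; case: (y <= key v); last by [].
split; first exact: sw_ab.
by rewrite !inE negb_or => /andP [H1 H2]; rewrite sw_id.
Qed.

Lemma cross_case u w y : u \in S -> w \in S -> u \notin Dset y -> key u < y -> y <= key w ->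
  share u w -> (c u != a) && (c u != b).
Proof.
move=> HuS HwS HuD Hu Hw Hsh.
have Hcr : cross y u by apply/existsP; exists w; rewrite HwS Hw Hsh.
rewrite -negb_or; apply/negP => E; move: HuD; by rewrite inE HuS Hu Hcr E.
Qed.

Lemma swap_proper y : proper (S :\: Dset y) (swc y).
Proof.
have Kmix : forall u w, u \in S :\: Dset y -> w \in S :\: Dset y -> adj u w ->
    key u < y -> y <= key w -> swc y u != swc y w.
  move=> u w; rewrite !inE => /andP [HuD HuS] /andP [HwD HwS] Hadj Hu Hw.
  have Hc := Hp HuS HwS Hadj.
  have HuD' : u \notin Dset y by rewrite inE.
  move: (Hadj) => /andP [_ Hsh].
  have /andP [Ha Hb] := cross_case HuS HwS HuD' Hu Hw Hsh.
  rewrite /swc (leqNgt y (key u)) Hu /= Hw; apply/eqP => E.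
  move: Hc; rewrite -(sw_id Ha Hb) E sw_inv eqxx //.
move=> u w Hu Hw Hadj.
case: (ltnP (key u) y) => Hku; case: (ltnP (key w) y) => Hkw.
- have Hu' : u \in S by move: Hu; rewrite inE => /andP [].
  have Hw' : w \in S by move: Hw; rewrite inE => /andP [].
  by rewrite /swc (leqNgt y (key u)) (leqNgt y (key w)) Hku Hkw /=; apply: Hp.
- exact: Kmix.
- rewrite eq_sym; apply: Kmix => //.
  by move: Hadj; rewrite /adj eq_sym share_sym.
- have Hu' : u \in S by move: Hu; rewrite inE => /andP [].
  have Hw' : w \in S by move: Hw; rewrite inE => /andP [].
  rewrite /swc Hku Hkw; apply/eqP => /(can_inj sw_inv) /eqP.
  by apply/negP; apply: Hp.
Qed.

Lemma swap_cls y : a != b -> cls (S :\: Dset y) (swc y) a = Aset y :|: Bset y.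
Proof.
move=> Hab; apply/setP => v; rewrite !inE /swc /sw.
case: (boolP (v \in S)) => HS; rewrite ?andbF ?andbT //=.
case: (ltnP (key v) y) => Hk /=.
  by case: (c v == a); case: (c v == b); case: (cross y v).
rewrite !andbF /= andbT.
case: ifP => [/eqP Ea|Ha]; first by rewrite Ea eq_sym (negbTE Hab).
case: ifP => [_|Hb]; first by rewrite ?eqxx.
by rewrite ?Ha ?Hb.
Qed.

Lemma swap_op t : #|cls S c b| <= t <= #|cls S c a| ->
  exists S' c', [/\ step [set a; b] S c S' c', proper S' c', #|cls S' c' a| = t
                  & #|S :\: S'| <= minn 2 p].
Proof.
move=> /andP [Hb Ha].
case: (eqVneq t #|cls S c a|) => [->|Hne].
  exists S, c; split => //; [exact: step_refl | by rewrite setDv cards0].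
have Hab : a != b.
  apply: contraNneq Hne => E; rewrite E in Ha *; by rewrite eqn_leq Ha Hb.
pose f y := #|Aset y| + #|Bset y|.
have [y Hy] : exists y, f y = t.
  apply: (@ivt f (size P * #|T|)).
  - move=> y _; have := Aset_step y; have := Bset_step y;
    have := subset_leq_card (Aset_sub y); have := subset_leq_card (Bset_sub y); rewrite /f; lia.
  - rewrite /f; have -> : Aset 0 = set0 by apply/setP => u; rewrite !inE ltn0 /= ?andbF ?andFb.
    have -> : Bset 0 = cls S c b by apply/setP => u; rewrite !inE andbT.
    by rewrite cards0.
  - rewrite /f; have -> : Bset (size P * #|T|) = set0.
      by apply/setP => u; rewrite !inE (leqNgt _ (key u)) key_lt /= ?andbF.
    have -> : Aset (size P * #|T|) = cls S c a.
      apply/setP => u; rewrite !inE key_lt /=.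
      have -> : cross (size P * #|T|) u = false.
        apply/negbTE/existsP => [] [w /andP [/andP [_ H] _]].
        by move: H; rewrite (leqNgt _ (key w)) key_lt.
      by rewrite andbT andbT.
    by rewrite cards0 addn0.
exists (S :\: Dset y), (swc y); split.
- exact: swap_step.
- exact: swap_proper.
- rewrite swap_cls // cardsU.
  have -> : Aset y :&: Bset y = set0.
    apply/setP => u; rewrite !inE.
    case: (ltnP (key u) y) => Hk; by rewrite ?andbF ?andFb //= ?andbF.
  by rewrite cards0 subn0.
- by rewrite diff_sub ?Dsub // Dset_card.
Qed.

End Swap.


Lemma cls_cU1 S c U j : j \in U -> #|U| = 1 -> #|cU S c U| = #|cls S c j|.
Proof.
move=> Hj HU; rewrite (cU_split S c Hj).
have : #|U :\ j| = 0 by move: HU; rewrite (cardsD1 j) Hj add1n => [[]].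
move/eqP; rewrite cards_eq0 => /eqP ->.
have -> : cU S c set0 = set0 by apply/setP => v; rewrite !inE andbF.
by rewrite cards0.
Qed.

Lemma main m : forall U S c q r, #|U| = m.+1 -> proper S c -> r <= m.+1 ->
  #|cU S c U| = m.+1 * q + r + minn 2 p * m ->
  exists S' c', [/\ step U S c S' c', proper S' c', #|S :\: S'| = minn 2 p * m &
     forall j, j \in U -> (#|cls S' c' j| == q) || (#|cls S' c' j| == q.+1)].
Proof.
elim: m => [|m IH] U S c q r HU Hp Hr Hs.
  exists S, c; split; first exact: step_refl; first done.
    by rewrite setDv cards0 muln0.
  move=> j Hj; rewrite -(cls_cU1 S c Hj HU) Hs muln0 addn0 mul1n.
  by case: r Hr {Hs} => [|[|]] //= _; rewrite ?addn0 ?addn1 eqxx ?orbT.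
set d := minn 2 p.
set t := if r < m.+2 then q else q.+1.
have Hsum := sum_cls S c U.
have Ht1 : m.+2 * t <= m.+2 * q + r.
  rewrite /t; case: ifP => Hrr; first by apply: leq_addr.
  move/negbT: Hrr => Hrr; have E : r = m.+2 by lia.
  by rewrite E mulnS addnC.
have Ht2 : #|cU S c U| < m.+2 * (t + d).+1.
  rewrite Hs /t; case: ifP => Hrr.
    have : d * m.+1 <= d * m.+2 by rewrite leq_mul2l leqnSn orbT.
    rewrite -/d; nia.
  move/negbT: Hrr => Hrr.
  have : d * m.+1 <= d * m.+2 by rewrite leq_mul2l leqnSn orbT.
  rewrite -/d; nia.
have [a Ha Hta] : exists2 a, a \in U & t <= #|cls S c a|.
  case: (boolP [exists a in U, t <= #|cls S c a|]).
    by case/existsP => a /andP [H1 H2]; exists a.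
  rewrite negb_exists => /forallP Hall.
  have Hlt : forall j, j \in U -> #|cls S c j| <= t.-1.
    move=> j Hj; have := Hall j; rewrite Hj /= -ltnNge => H.
    by rewrite -ltnS (ltn_predK H).
  have : 0 < #|U| by rewrite HU.
  case/card_gt0P => j0 Hj0; have := Hall j0; rewrite Hj0 /= -ltnNge => Ht0.
  have H : \sum_(j in U) #|cls S c j| <= \sum_(j in U) t.-1 by apply: leq_sum.
  rewrite Hsum sum_nat_const HU in H.
  have : m.+2 * t.-1 < m.+2 * t by rewrite ltn_mul2l /= prednK ?ltnSn // (leq_ltn_trans _ Ht0).
  lia.
have [b Hb Htb] : exists2 b, b \in U & #|cls S c b| <= t + d.
  case: (boolP [exists b in U, #|cls S c b| <= t + d]).
    by case/existsP => b /andP [H1 H2]; exists b.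
  rewrite negb_exists => /forallP Hall.
  have Hgt : forall j, j \in U -> (t + d).+1 <= #|cls S c j|.
    move=> j Hj; have := Hall j; rewrite Hj /= -ltnNge => H; exact: H.
  have H : \sum_(j in U) (t + d).+1 <= \sum_(j in U) #|cls S c j| by apply: leq_sum.
  rewrite Hsum sum_nat_const HU in H.
  lia.
have [x [S1 [c1 [Hx Hst1 Hp1 Hcx Hd1]]]] : exists x S1 c1,
    [/\ x \in U, step U S c S1 c1, proper S1 c1, #|cls S1 c1 x| = t & #|S :\: S1| <= d].
  case: (leqP #|cls S c b| t) => Hbt.
    have [S1 [c1 [H1 H2 H3 H4]]] := swap_op Hp (t := t) (a := a) (b := b) (introT andP (conj Hbt Hta)).
    exists a, S1, c1; split => //.
    apply: step_mono H1; apply/subsetP => z; rewrite !inE => /orP [] /eqP ->; by [].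
  have Hav : #|cls S c b| - t <= #|cU S c [set b]|.
    have -> : cU S c [set b] = cls S c b by apply/setP => v; rewrite !inE.
    exact: leq_subr.
  have [S1 [Hst Hc]] := pad Hav.
  exists b, S1, c; split => //.
  - by apply: step_mono Hst; rewrite sub1set.
  - by case: Hst => Hsub _ _; apply: proper_sub Hsub Hp.
  - have := step_cU Hst; rewrite Hc.
    have -> : cU S c [set b] = cls S c b by apply/setP => v; rewrite !inE.
    have -> : cU S1 c [set b] = cls S1 c b by apply/setP => v; rewrite !inE.
    lia.
  - by rewrite Hc; lia.
have Hs1 := step_cU Hst1.
have Hsplit1 := cU_split S1 c1 Hx.
have Hav : d - #|S :\: S1| <= #|cU S1 c1 (U :\ x)|.
  rewrite /t in Hcx Hs1 Hsplit1 *; case: ifP Hcx => Hrr Hcx; lia.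
have [S2 [Hst2 Hc2]] := pad Hav.
have Hp2 : proper S2 c1 by case: Hst2 => Hsub _ _; apply: proper_sub Hsub Hp1.
have Hx2 : cls S2 c1 x = cls S1 c1 x by apply: (step_cls Hst2); rewrite !inE eqxx.
have Hs2 := step_cU Hst2.
have HU' : #|U :\ x| = m.+1 by move: HU; rewrite (cardsD1 x) Hx add1n => [[]].
set r' := if r < m.+2 then r else m.+1.
have Hr' : r' <= m.+1 by rewrite /r'; case: ifP => // Hrr; lia.
have Hs' : #|cU S2 c1 (U :\ x)| = m.+1 * q + r' + d * m.
  rewrite /r' /t in Hcx Hs1 Hsplit1 Hav Hc2 Hs2 *; case: ifP Hcx Hav Hc2 => Hrr Hcx Hav Hc2.
    rewrite mulnS in Hs; rewrite mulSn in Hs; lia.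
  rewrite mulnS in Hs; rewrite mulSn in Hs; lia.
have [S3 [c3 [Hst3 Hp3 Hd3 Hcnt3]]] := IH (U :\ x) S2 c1 q r' HU' Hp2 Hr' Hs'.
exists S3, c3; split => //.
- apply: (step_trans Hst1); apply: (step_trans (S2 := S2) (c2 := c1)).
    by apply: step_mono Hst2; apply: subsetDl.
  by apply: step_mono Hst3; apply: subsetDl.
- case: Hst1 => Hsub1 _ _; case: Hst2 => Hsub2 _ _; case: Hst3 => Hsub3 _ _.
  rewrite (diff_add Hsub3 (subset_trans Hsub2 Hsub1)) (diff_add Hsub2 Hsub1) Hc2 Hd3.
  rewrite mulnS -/d; have := Hd1; lia.
- move=> j Hj; case: (eqVneq j x) => [->|Hjx].
    rewrite (step_cls Hst3) ?inE ?eqxx // Hx2 Hcx /t.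
    by case: ifP => _; rewrite eqxx ?orbT.
  by apply: Hcnt3; rewrite !inE Hjx.
Qed.

End Main.

Unset Implicit Arguments.
Theorem corollary1 (T : finType) (e : rel T) (p : nat) :
  simple_graph e -> pathwidth_at_most e p ->
  almost_equitably_colorable e (p ^ 2) p.+1.
Proof.
move=> [Hsym Hirr] [P [[cover Hedge consec] bagsz]].
case: (leqP #|T| (p ^ 2)) => Hn.
  exists setT; split; first by rewrite cardsT.
  exists (fun _ => ord0); split; first by move=> u v; rewrite inE.
  move=> i j.
  have -> : color_class setT (fun _ : T => (ord0 : 'I_p.+1)) i = set0.
    by apply/setP => x; rewrite !inE.
  by rewrite cards0.
have [c0 Hc0] := greedy cover consec bagsz.
set d := minn 2 p.
have Hdp : d * p <= p ^ 2 by rewrite -mulnn leq_mul2r geq_minr orbT.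
set n := #|T| - d * p.
have HU : #|[set: 'I_p.+1]| = p.+1 by rewrite cardsT card_ord.
have Hr : n %% p.+1 <= p.+1 by apply: ltnW; apply: ltn_pmod.
have Hs : #|cU [set: T] c0 [set: 'I_p.+1]| = p.+1 * (n %/ p.+1) + n %% p.+1 + d * p.
  have -> : cU [set: T] c0 [set: 'I_p.+1] = [set: T] by apply/setP => x; rewrite !inE.
  rewrite cardsT mulnC -divn_eq /n; lia.
have [S' [c' [Hst Hp' Hd Hcnt]]] := main cover consec bagsz HU Hc0 Hr Hs.
exists (~: S'); split.
  by rewrite -setTD Hd.
exists c'; split.
  move=> u v; rewrite !in_setC !negbK => Hu Hv Huv.
  apply: Hp' => //; apply/andP; split.
    by apply/eqP => E; move: Huv; rewrite E Hirr.
  case: (Hedge u v Huv) => B HB /andP [HuB HvB].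
  apply: (@shareP _ P _ _ (index B P)); by rewrite /bag nth_index.
move=> i j.
have E : forall k, color_class (~: S') c' k = cls S' c' k.
  by move=> k; apply/setP => x; rewrite !inE negbK.
rewrite !E.
have := Hcnt i (in_setT i); have := Hcnt j (in_setT j).
by case/orP => /eqP ->; case/orP => /eqP ->; lia.
Qed.
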